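(* Let $\alpha>1/2$, $c_0>0$, $\delta_n=n^{-\alpha/(2\alpha+1)}$, suppose $p\le Cn\delta_n^2$ for some $C>0$, let $\theta_{*,p}\in\mathbb R^p$ with $\|\theta_{*,p}\|_\alpha\le c_0$, let $\Pi=N(0,n^{-1/(2\alpha+1)}\Sigma_\alpha^{-1})$ on $\mathbb R^p$ and $\mathcal B_{n,r}=\{\theta\in\mathbb R^p:\|\theta-\theta_{*,p}\|\le\delta_n,\|\theta\|_\alpha\le r\}$. Then for any sufficiently large $r\ge\max(4,2c_0)$ there is a constant $c\equiv c(C,\alpha,c_0,r)>0$ such that $\Pi(\mathcal B_{n,r})\ge e^{-cn\delta_n^2}$.
   Context: $\|\cdot\|$ is the Euclidean norm on $\mathbb R^p$, $\|\theta\|_\alpha^2=\sum_{k=1}^pk^{2\alpha}\theta_k^2$, $\Sigma_\alpha=\mathrm{diag}(1,2^{2\alpha},\dots,p^{2\alpha})$. *)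

(* Defs.v *)
From HB Require Import structures.
From mathcomp Require Import all_boot all_order all_algebra.
From mathcomp Require Import all_classical all_reals all_analysis.
Set Implicit Arguments. Unset Strict Implicit. Unset Printing Implicit Defensive.
Import Order.TTheory GRing.Theory Num.Theory.
Local Open Scope classical_set_scope.
Local Open Scope ring_scope.

(* Vectors of R^p are represented as functions nat -> R; only the
   coordinates 0..p-1 are used (coordinate k corresponds to index k+1
   of the paper). *)

Definition upd {R : realType} (v : nat -> R) (q : nat) (x : R) : nat -> R :=
  fun k => if k == q then x else v k.

(* Iterated integral against the product of independent centred normal
   laws N(0, s k ^ 2), k = 0..p-1 : this is the integral of f against the
   Gaussian measure N(0, diag(s 0 ^2, ..., s (p-1) ^2)) on R^p. *)
Fixpoint gauss_iter {R : realType} (p : nat) (s : nat -> R)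
    (f : (nat -> R) -> \bar R) : \bar R :=
  match p with
  | 0 => f (fun _ => 0)
  | q.+1 => (\int[normal_prob 0 (s q)]_x gauss_iter q s (fun v => f (upd v q x)))%E
  end.

Definition gauss_measure {R : realType} (p : nat) (s : nat -> R)
    (B : set (nat -> R)) : \bar R :=
  gauss_iter p s (fun v => (\1_B v)%:E).

Definition eucl_norm {R : realType} (p : nat) (v : nat -> R) : R :=
  Num.sqrt (\sum_(k < p) v k ^+ 2).

Definition alpha_norm {R : realType} (alpha : R) (p : nat) (v : nat -> R) : R :=
  Num.sqrt (\sum_(k < p) ((k.+1)%:R `^ (2 * alpha)) * v k ^+ 2).

Definition delta_n {R : realType} (alpha : R) (n : nat) : R :=
  (n%:R) `^ (- (alpha / (2 * alpha + 1))).

(* standard deviations of the prior N(0, n^{-1/(2alpha+1)} Sigma_alpha^{-1}):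
   variance of coordinate k (0-based) is n^{-1/(2alpha+1)} (k+1)^{-2 alpha} *)
Definition prior_sd {R : realType} (alpha : R) (n : nat) (k : nat) : R :=
  (n%:R) `^ (- (1 / (2 * (2 * alpha + 1)))) * ((k.+1)%:R `^ (- alpha)).

Definition Bnr {R : realType} (alpha : R) (n p : nat) (thetas : nat -> R) (r : R)
  : set (nat -> R) :=
  [set th | eucl_norm p (fun k => th k - thetas k) <= delta_n alpha n
            /\ alpha_norm alpha p th <= r].

(* Main.v *)
Require Import Defs.
From HB Require Import structures.
From mathcomp Require Import all_boot all_order all_algebra.
From mathcomp Require Import all_classical all_reals all_analysis.
From mathcomp Require Import measurable_realfun.
From mathcomp Require Import ring lra.
Import Order.TTheory GRing.Theory Num.Theory.
Local Open Scope ring_scope.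

Lemma mono_int d (T : measurableType d) (R : realType) (mu : {measure set T -> \bar R})
  (f g : T -> \bar R) : (forall x, 0 <= f x)%E -> (forall x, f x <= g x)%E ->
  (\int[mu]_x f x <= \int[mu]_x g x)%E.
Proof.
move=> f0 fg.
have g0 : forall x, (0 <= g x)%E by move=> x; exact: le_trans (f0 x) (fg x).
rewrite !ge0_integralE //; apply: ereal_sup_le => _ [h /= hf <-].
exists h => //= x; apply: le_trans (hf x) _.
rewrite /patch /=; case: ifP => // _.
Qed.

Section G.
Variable R : realType.
Implicit Types (s : nat -> R) (f g : (nat -> R) -> \bar R).

Lemma gauss_iter_ge0 p s f : (forall v, 0 <= f v)%E -> (0 <= gauss_iter p s f)%E.
Proof.
elim: p f => [|q IH] f f0 //=.
by apply: integral_ge0 => x _; apply: IH => v.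
Qed.

Lemma gauss_iter_mono p s f g : (forall v, 0 <= g v)%E -> (forall v, g v <= f v)%E ->
  (gauss_iter p s g <= gauss_iter p s f)%E.
Proof.
elim: p f g => [|q IH] f g g0 gf //=.
apply: mono_int => x; first by apply: gauss_iter_ge0.
by apply: IH.
Qed.

Lemma gauss_iter0 p s : gauss_iter p s (fun _ => 0%E) = 0%E.
Proof.
elim: p => [|q IH] //=.
under eq_integral do rewrite IH.
by rewrite integral0.
Qed.

Lemma gauss_box p s (I : nat -> set R) : (forall k, measurable (I k)) ->
  gauss_iter p s (fun v => (\prod_(k < p) \1_(I k) (v k))%:E) =
  (\prod_(k < p) normal_prob 0 (s k) (I k))%E.
Proof.
move=> mI; elim: p => [|q IH] /=; first by rewrite !big_ord0.
have E : forall x, gauss_iter q s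
   (fun v => (\prod_(k < q.+1) \1_(I k) (upd v q x k))%:E) =
   ((\1_(I q) x)%:E * \prod_(k < q) normal_prob 0 (s k) (I k))%E.
  move=> x.
  have -> : (fun v => (\prod_(k < q.+1) (\1_(I k) (upd v q x k) : R))%:E) =
     (fun v => (\prod_(k < q) \1_(I k) (v k) * \1_(I q) x)%:E).
    apply/funext => v; rewrite big_ord_recr /= /upd eqxx.
    congr ((_ * _)%:E); apply: eq_bigr => k _.
    by rewrite ifF // ltn_eqF.
  rewrite /indic; case: (x \in I q) => /=.
    by rewrite mul1e -IH; congr gauss_iter; apply/funext => v; rewrite mulr1.
  by rewrite mul0e; under [X in gauss_iter _ _ X]funext do rewrite mulr0; rewrite gauss_iter0.
under eq_integral do rewrite E.
under eq_integral do rewrite muleC.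
rewrite ge0_integralZl //.
- rewrite integral_indic //; last exact: mI.
  rewrite [in RHS]big_ord_recr /=.
  by congr (_ * _)%E; congr (normal_prob _ _ _); rewrite setIT.
- apply/measurable_EFinP. exact: measurable_indic (mI q).
- by apply: prode_ge0 => k _.
Qed.
End G.
Section N.
Variable R : realType.

Lemma peak_lb (s : R) : 0 < s -> (3 * s)^-1 <= normal_peak s.
Proof.
move=> s0.
have X0 : 0 < s ^+ 2 * pi *+ 2 by rewrite pmulrn_lgt0 // mulr_gt0 // ?pi_gt0 // exprn_gt0.
rewrite /normal_peak lef_pV2; last 2 first.
- by rewrite posrE mulr_gt0.
- by rewrite posrE sqrtr_gt0.
have pi4 : pi < 4 :> R by have := @pihalf_lt2 R; lra.
rewrite -(@ger0_norm _ (3 * s)); last by rewrite mulr_ge0 // ltW.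
rewrite -sqrtr_sqr ler_sqrt; last by rewrite exprn_ge0 // mulr_ge0 // ltW.
rewrite mulr2n !expr2.
have : 0 < s * s by rewrite mulr_gt0.
nra.
Qed.

Lemma e_ge2 : 2 <= expR 1 :> R.
Proof. by have := @expR_ge1Dx R 1; lra. Qed.

Lemma normal_itv_lb (s a w : R) : 0 < s -> 0 < w -> w <= s ->
  ((expR (-2) * (w / s) * expR (- (a ^+ 2 / s ^+ 2)))%:E
     <= normal_prob 0 s `[(a - w)%R, (a + w)%R]%classic)%E.
Proof.
move=> s0 w0 ws.
set k := (3 * s)^-1 * expR (- ((a ^+ 2 + w ^+ 2) / s ^+ 2)).
have k0 : 0 <= k by rewrite mulr_ge0 ?expR_ge0 // invr_ge0 mulr_ge0 // ltW.
have H1 : ((expR (-2) * (w / s) * expR (- (a ^+ 2 / s ^+ 2)))%:E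
   <= (\int[lebesgue_measure]_(x in `[(a - w)%R, (a + w)%R]%classic) (cst k%:E) x))%E.
  rewrite integral_cst //= lebesgue_measure_itv /= lte_fin.
  have -> : (a - w < a + w) = true by apply/idP; lra.
  rewrite -EFinD -EFinM lee_fin.
  have E : expR (- ((a ^+ 2 + w ^+ 2) / s ^+ 2)) =
      expR (- (a ^+ 2 / s ^+ 2)) * expR (- (w ^+ 2 / s ^+ 2)).
    by rewrite -expRD mulrDl opprD.
  have B : expR (-1) <= expR (- (w ^+ 2 / s ^+ 2)).
    rewrite ler_expR lerN2 ler_pdivrMr ?exprn_gt0 // mul1r.
    by rewrite ler_sqr // ?nnegrE ltW.
  have e1 : expR (-1) <= 2^-1 :> R.
    rewrite expRN lef_pV2 ?posrE ?expR_gt0 //; exact: e_ge2.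
  have e2 : expR (-2) = expR (-1) * expR (-1) :> R by rewrite -expRD; congr expR; lra.
  have T : (3 * s)^-1 * (a + w - (a - w)) = (2/3) * (w / s).
    by field; rewrite gt_eqF.
  rewrite /k E e2.
  have -> : (3 * s)^-1 * (expR (- (a ^+ 2 / s ^+ 2)) * expR (- (w ^+ 2 / s ^+ 2))) *
    (a + w - (a - w)) = ((3 * s)^-1 * (a + w - (a - w))) * expR (- (a ^+ 2 / s ^+ 2))
    * expR (- (w ^+ 2 / s ^+ 2)) by ring.
  rewrite T.
  have t0 : 0 < w / s by rewrite divr_gt0.
  have A0 := expR_gt0 (- (a ^+ 2 / s ^+ 2)).
  have e10 := expR_gt0 (-1 : R).
  set A := expR (- (a ^+ 2 / s ^+ 2)) in A0 *.
  set b := expR (- (w ^+ 2 / s ^+ 2)) in B *.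
  set t := w / s in t0 *.
  set e := expR (-1) in e1 e10 B *.
  have h1 : e * e * t * A <= (2 / 3) * t * A * e.
    have u0 : 0 < e * (t * A) by apply: mulr_gt0 => //; exact: mulr_gt0.
    have -> : e * e * t * A = e * (e * (t * A)) by ring.
    have -> : 2 / 3 * t * A * e = 2 / 3 * (e * (t * A)) by ring.
    rewrite ler_pM2r //; lra.
  apply: (le_trans h1); rewrite ler_pM2l //; apply: mulr_gt0 => //; apply: mulr_gt0 => //; lra.
apply: (le_trans H1); rewrite /normal_prob.
apply: ge0_le_integral => //.
- by apply/measurable_EFinP; apply: measurable_funTS; exact: measurable_normal_pdf.
move=> x; rewrite /= in_itv /= => /andP[xl xr].
rewrite lee_fin normal_pdfE ?gt_eqF //.
rewrite /k; apply: ler_pM.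
- by rewrite invr_ge0 mulr_ge0 // ltW.
- exact: expR_ge0.
- exact: peak_lb.
rewrite /normal_fun ler_expR mulNr lerN2 subr0 mulr2n ler_pdivrMr; last first.
  by rewrite addr_gt0 // exprn_gt0.
have -> : (a ^+ 2 + w ^+ 2) / s ^+ 2 * (s ^+ 2 + s ^+ 2) = 2 * (a ^+ 2 + w ^+ 2).
  by field; rewrite gt_eqF.
have h1 : 0 <= (x - (a - w)) * ((a + w) - x) by apply: mulr_ge0; lra.
have h2 : 0 <= (x - 2 * a) ^+ 2 by apply: sqr_ge0.
nra.
Qed.
End N.
Section E.
Variable R : realType.

Lemma powRE' (x y : R) : 0 < x -> x `^ y = expR (y * ln x).
Proof. by move=> x0; rewrite /powR gt_eqF. Qed.

Lemma t_le_2exp (t : R) : t <= 2 * expR (t / 2).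
Proof. have := expR_ge1Dx (t / 2); lra. Qed.

Lemma sqrt_expR (t : R) : Num.sqrt (expR t) = expR (t / 2).
Proof.
have -> : expR t = expR (t / 2) ^+ 2 by rewrite expr2 -expRD; congr expR; field.
by rewrite sqrtr_sqr ger0_norm // expR_ge0.
Qed.

Lemma sum_isqrt (p : nat) :
  \sum_(k < p) (Num.sqrt (k.+1)%:R)^-1 <= 2 * Num.sqrt (p%:R : R).
Proof.
elim: p => [|p IH]; first by rewrite big_ord0 sqrtr0 mulr0.
rewrite big_ord_recr /=.
set s := Num.sqrt (p%:R : R); set t := Num.sqrt (p.+1%:R : R).
have s0 : 0 <= s by apply: sqrtr_ge0.
have t0 : 0 < t by rewrite sqrtr_gt0 ltr0n.
have ts : t ^+ 2 = s ^+ 2 + 1 by rewrite !sqr_sqrtr ?ler0n // -natr1.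
apply: le_trans (lerD IH (lexx _)) _.
rewrite -subr_ge0.
have -> : 2 * t - (2 * s + t^-1) = (2 * t * t - 2 * s * t - 1) / t by field; rewrite gt_eqF.
apply: divr_ge0; last exact: ltW.
have := sqr_ge0 (s - t); nra.
Qed.

End E.

Lemma lee_prod_ord (R : realType) p (x : nat -> \bar R) (y : nat -> R) :
  (forall k, (k < p)%N -> 0 <= y k) -> (forall k, (k < p)%N -> ((y k)%:E <= x k)%E) ->
  (\prod_(k < p) (y k)%:E <= \prod_(k < p) x k)%E.
Proof.
elim: p => [|p IH] y0 yx; first by rewrite !big_ord0.
rewrite !big_ord_recr /=; apply: lee_pmul.
- by apply: prode_ge0 => k _; rewrite lee_fin y0 // leqW.
- by rewrite lee_fin y0.
- by apply: IH => k kp; [apply: y0 | apply: yx]; exact: leqW.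
- exact: yx.
Qed.

Lemma indic_ge0 (R : realType) (T : Type) (A : set T) (x : T) : 0 <= (\1_A x : R).
Proof. by rewrite indicE; case: (x \in A). Qed.

Lemma sumD2 (R : realType) p (f g : nat -> R) :
  \sum_(k < p) (f k + g k) = \sum_(k < p) f k + \sum_(k < p) g k.
Proof. by rewrite big_split. Qed.

Lemma sumD3 (R : realType) p (f g h : nat -> R) :
  \sum_(k < p) (f k + g k + h k) = \sum_(k < p) f k + \sum_(k < p) g k + \sum_(k < p) h k.
Proof. by rewrite !big_split. Qed.


Theorem lemma6p11 (R : realType) (alpha c0 C : R) :
  1 / 2 < alpha -> 0 < c0 -> 0 < C ->
  exists r0 : R, forall r : R, r0 <= r -> Num.max 4 (2 * c0) <= r ->
    exists c : R, 0 < c /\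
      forall (n p : nat) (thetas : nat -> R),
        (0 < n)%N ->
        p%:R <= C * n%:R * delta_n alpha n ^+ 2 ->
        alpha_norm alpha p thetas <= c0 ->
        ((expR (- (c * n%:R * delta_n alpha n ^+ 2)))%:E
          <= gauss_measure p (prior_sd alpha n) (Bnr alpha n p thetas r))%E.
Proof.
move=> ha hc0 hC.
have a0 : 0 < alpha by lra.
have a1 : 0 < 2 * alpha + 1 by lra.
exists (Num.sqrt (2 * c0 ^+ 2 + 2 * expR (2 * alpha * ln C))) => r r0r _.
set c := 2 * C + c0 ^+ 2 + C * `|ln C| / 2 + 4 * alpha * Num.sqrt C.
have c0' : 0 < c.
  have := sqrtr_ge0 C; have := normr_ge0 (ln C); have : 0 < c0 ^+ 2 by rewrite exprn_gt0.
  rewrite /c; nra.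
exists c; split => // n p a n0 hp ha0.
set L := ln (n%:R : R).
set u := L / (2 * alpha + 1).
have n0' : (0 : R) < n%:R by rewrite ltr0n.
have nE : n%:R = expR L by rewrite /L lnK.
have dE : delta_n alpha n = expR (- (alpha * u)).
  rewrite /delta_n powRE' //; congr expR; rewrite /u -/L; field; lra.
have ME : n%:R * delta_n alpha n ^+ 2 = expR u.
  rewrite dE nE expr2 -!expRD; congr expR; rewrite /u; field; lra.
have sE : forall k, prior_sd alpha n k = expR (- (u / 2) - alpha * ln (k.+1%:R)).
  move=> k; rewrite /prior_sd !powRE' ?ltr0n // -expRD; congr expR; rewrite /u -/L; field; lra.
rewrite -mulrA ME in hp *.
set M := expR u in hp *.
have M0 : 0 < M by apply: expR_gt0.
set d := delta_n alpha n in dE *.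
have d0 : 0 < d by rewrite dE expR_gt0.
set s := prior_sd alpha n.
have s0 : forall k, 0 < s k by move=> k; rewrite /s sE expR_gt0.
set h := d / Num.sqrt (p%:R : R).
pose w k := Num.min (s k) h.
pose I k := `[a k - w k, a k + w k]%classic.
set S := \sum_(k < p) ((k.+1)%:R `^ (2 * alpha)) * a k ^+ 2.
have S0 : 0 <= S by apply: sumr_ge0 => k _; rewrite mulr_ge0 ?powR_ge0 ?sqr_ge0.
have Sc : S <= c0 ^+ 2.
  have sS : Num.sqrt S <= c0 by exact: ha0.
  rewrite -(sqr_sqrtr S0); have := sqrtr_ge0 S; nra.
have box : forall v, (forall k, (k < p)%N -> I k (v k)) -> Bnr alpha n p a r v.
  move=> v hv.
  have h0 : 0 <= h by rewrite divr_ge0 ?sqrtr_ge0 // ltW.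
  have hk : forall k, (k < p)%N -> (v k - a k) ^+ 2 <= h ^+ 2.
    move=> k kp; have := hv k kp; rewrite /I /= in_itv /= => /andP[l1 l2].
    have wh : w k <= h by rewrite /w ge_min lexx orbT.
    have w0 : 0 <= w k by lra.
    nra.
  have ph : p%:R * h ^+ 2 <= d ^+ 2.
    case: (posnP p) => [->|pp]; first by rewrite mul0r sqr_ge0.
    rewrite /h expr_div_n sqr_sqrtr ?ler0n // mulrC divfK //.
    by rewrite pnatr_eq0 -lt0n.
  have d2 : Num.sqrt (d ^+ 2) = d by rewrite sqrtr_sqr ger0_norm // ltW.
  split.
    rewrite /eucl_norm -/d -d2 ler_sqrt ?sqr_ge0 //.
    apply: le_trans ph; rewrite mulr_natl -[X in h ^+ 2 *+ X]card_ord -sumr_const.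
    by apply: ler_sum => k _; apply: hk.
  have r00 : 0 <= r by apply: le_trans r0r; exact: sqrtr_ge0.
  case: (posnP p) => [p0|pp].
    by rewrite /alpha_norm p0 big_ord0 sqrtr0.
  set P := expR (2 * alpha * ln (p%:R : R)).
  have P0 : 0 <= P by apply: expR_ge0.
  have Wk : forall k, (k < p)%N -> (k.+1)%:R `^ (2 * alpha) <= P.
    move=> k kp; rewrite powRE' ?ltr0n // ler_expR ler_pM2l ?mulr_gt0 //.
    by rewrite ler_ln ?posrE ?ltr0n // ler_nat.
  have PD : P * d ^+ 2 <= expR (2 * alpha * ln C).
    have lp : ln (p%:R : R) <= ln C + u.
      rewrite -[u]expRK -lnM ?posrE ?expR_gt0 // ler_ln ?posrE ?ltr0n ?mulr_gt0 //.
    rewrite dE /P expr2 -!expRD ler_expR; nra.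
  have T : \sum_(k < p) (k.+1)%:R `^ (2 * alpha) * v k ^+ 2 <=
      \sum_(k < p) (2 * ((k.+1)%:R `^ (2 * alpha) * a k ^+ 2) + 2 * (P * h ^+ 2)).
    apply: ler_sum => k _.
    have W0 := powR_ge0 (k.+1)%:R (2 * alpha).
    have Wp := Wk k (ltn_ord k).
    have hk' := hk k (ltn_ord k).
    have vv : v k ^+ 2 <= 2 * a k ^+ 2 + 2 * (v k - a k) ^+ 2.
      have := sqr_ge0 (v k - 2 * a k); nra.
    have m2 : (k.+1)%:R `^ (2 * alpha) * (v k - a k) ^+ 2 <= P * h ^+ 2.
      by apply: ler_pM => //; exact: sqr_ge0.
    have m1 := ler_wpM2l W0 vv.
    set W := (k.+1)%:R `^ (2 * alpha) in W0 Wp m1 m2 *.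
    nra.
  rewrite (@sumD2 R p (fun k => 2 * ((k.+1)%:R `^ (2 * alpha) * a k ^+ 2)) (fun _ => 2 * (P * h ^+ 2))) in T.
  have E1 : \sum_(k < p) 2 * ((k.+1)%:R `^ (2 * alpha) * a k ^+ 2) = 2 * S.
    by rewrite /S mulr_sumr.
  have E2 : \sum_(k < p) 2 * (P * h ^+ 2) = 2 * (P * h ^+ 2) * p%:R.
    by rewrite sumr_const card_ord mulr_natr.
  rewrite E1 E2 in T.
  have ph' : P * h ^+ 2 * p%:R <= P * d ^+ 2.
    by rewrite -mulrA ler_wpM2l // mulrC.
  rewrite /alpha_norm.
  apply: le_trans r0r; rewrite ler_sqrt; last first.
    by apply: addr_ge0; rewrite mulr_ge0 ?expR_ge0 ?sqr_ge0.
  apply: le_trans T _.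
  have := sqr_ge0 c0; lra.
have step1 : (gauss_iter p s (fun v => (\prod_(k < p) (\1_(I k) (v k) : R))%:E)
    <= gauss_measure p s (Bnr alpha n p a r))%E.
  rewrite /gauss_measure; apply: gauss_iter_mono => v.
    by rewrite lee_fin; apply: prodr_ge0 => k _; apply: indic_ge0.
  have [allin|notall] := pselect (forall k : 'I_p, I k (v k)).
    rewrite big1; last by move=> k _; rewrite indicE mem_set.
    rewrite indicE mem_set //; apply: box => k kp; exact: (allin (Ordinal kp)).
  have [k nk] : exists k : 'I_p, ~ I k (v k).
    by apply: contra_notP notall => H k; apply: contra_notP H => nk; exists k.
  rewrite (bigD1 k) //= indicE memNset // mul0r lee_fin; exact: indic_ge0.
rewrite gauss_box in step1; last by move=> k; exact: measurable_itv.
apply: le_trans step1.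
have p1 : forall k, (k < p)%N -> (1 : R) <= p%:R.
  by move=> k kp; rewrite ler1n (leq_ltn_trans _ kp).
pose l k := `|ln C| / 2 + 2 * alpha * Num.sqrt (M / (k.+1)%:R).
have l0 : forall k, 0 <= l k.
  move=> k; rewrite /l; apply: addr_ge0; first by rewrite divr_ge0.
  by rewrite mulr_ge0 ?sqrtr_ge0 // mulr_ge0 // ltW.
have sqC : Num.sqrt C = expR (ln C / 2) by rewrite -sqrt_expR lnK.
have sqM : Num.sqrt M = expR (u / 2) by rewrite sqrt_expR.
have Mk : forall k, Num.sqrt (M / (k.+1)%:R) = expR ((u - ln (k.+1)%:R) / 2).
  move=> k; rewrite -sqrt_expR expRD expRN lnK //.
  by rewrite posrE ltr0n.
have sqp : Num.sqrt (p%:R : R) <= Num.sqrt C * Num.sqrt M.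
  by rewrite -sqrtrM ?ler_sqrt // ?mulr_ge0 // ltW.
have core : forall k, (k < p)%N -> s k <= h * expR (l k).
  move=> k kp.
  have sp0 : 0 < Num.sqrt (p%:R : R) by rewrite sqrtr_gt0; have := p1 k kp; lra.
  rewrite /h mulrAC ler_pdivlMr //.
  apply: (le_trans (y := s k * (Num.sqrt C * Num.sqrt M))).
    by rewrite ler_pM2l.
  rewrite /s sE sqC sqM dE -!expRD ler_expR /l Mk.
  have := @t_le_2exp _ (u - ln (k.+1)%:R); have := ler_norm (ln C).
  set E := expR _; nra.
pose Lk k := 2 + a k ^+ 2 / s k ^+ 2 + l k.
have perk : forall k, (k < p)%N ->
    ((expR (- Lk k))%:E <= normal_prob 0 (s k) (I k))%E.
  move=> k kp.
  have h0 : 0 < h.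
    by rewrite divr_gt0 // sqrtr_gt0; have := p1 k kp; lra.
  have w0 : 0 < w k by rewrite /w lt_min s0 h0.
  have ws : w k <= s k by rewrite /w ge_min lexx.
  apply: le_trans _ (@normal_itv_lb R _ _ _ (s0 k) w0 ws); rewrite lee_fin.
  have key : expR (- l k) <= w k / s k.
    rewrite ler_pdivlMr // mulrC /w le_min; apply/andP; split.
      by apply: ler_piMr; [exact: ltW | rewrite -expR0 ler_expR oppr_le0].
    rewrite expRN ler_pdivrMr ?expR_gt0 //; exact: core.
  have -> : expR (- Lk k) = expR (-2) * expR (- l k) * expR (- (a k ^+ 2 / s k ^+ 2)).
    by rewrite -!expRD; congr expR; rewrite /Lk; ring.
  by rewrite ler_pM2r ?expR_gt0 // ler_pM2l ?expR_gt0.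
apply: le_trans _ (@lee_prod_ord R p (fun k => normal_prob 0 (s k) (I k)) (fun k => expR (- Lk k)) (fun k _ => expR_ge0 _) perk).
rewrite prodEFin lee_fin -expR_sum ler_expR sumrN lerN2 -mulrA ME -/M.
have SA : \sum_(k < p) a k ^+ 2 / s k ^+ 2 = M * S.
  rewrite /S mulr_sumr; apply: eq_bigr => k _.
  have s2 : s k ^+ 2 = (M * expR (2 * alpha * ln (k.+1)%:R))^-1.
    by rewrite /s sE expr2 /M -!expRD -expRN; congr expR; lra.
  rewrite s2 powRE' ?ltr0n //.
  have : M * expR (2 * alpha * ln (k.+1)%:R) != 0 by rewrite mulf_neq0 // gt_eqF ?expR_gt0.
  by move=> H; field; rewrite !gt_eqF ?expR_gt0.
have Sl : \sum_(k < p) Num.sqrt (M / (k.+1)%:R) <= 2 * Num.sqrt C * M.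
  have -> : \sum_(k < p) Num.sqrt (M / (k.+1)%:R) =
      Num.sqrt M * \sum_(k < p) (Num.sqrt (k.+1)%:R)^-1.
    rewrite mulr_sumr; apply: eq_bigr => k _.
    by rewrite sqrtrM ?ltW // sqrtrV.
  have sM0 := sqrtr_ge0 M.
  have sMM : Num.sqrt M * Num.sqrt M = M by rewrite -expr2 sqr_sqrtr // ltW.
  apply: (le_trans (y := Num.sqrt M * (2 * (Num.sqrt C * Num.sqrt M)))).
    apply: ler_wpM2l => //; apply: le_trans (sum_isqrt _ p) _.
    by rewrite ler_pM2l.
  have -> : Num.sqrt M * (2 * (Num.sqrt C * Num.sqrt M)) =
    2 * Num.sqrt C * (Num.sqrt M * Num.sqrt M) by ring.
  by rewrite sMM.
have pC : p%:R <= C * M := hp.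
have -> : \sum_(k < p) Lk k = 2 * p%:R + M * S +
    (p%:R * (`|ln C| / 2) + 2 * alpha * \sum_(k < p) Num.sqrt (M / (k.+1)%:R)).
  have LkE : forall k : 'I_p, Lk k = 2 + a k ^+ 2 / s k ^+ 2 +
      (`|ln C| / 2 + 2 * alpha * Num.sqrt (M / (k.+1)%:R)) by [].
  rewrite (eq_bigr _ (fun k _ => LkE k)).
  rewrite (@sumD3 R p (fun _ => 2) (fun k => a k ^+ 2 / s k ^+ 2)
     (fun k => `|ln C| / 2 + 2 * alpha * Num.sqrt (M / (k.+1)%:R))).
  rewrite SA (@sumD2 R p (fun _ => `|ln C| / 2) (fun k => 2 * alpha * Num.sqrt (M / (k.+1)%:R))) -(mulr_sumr _ _ _ (2 * alpha)) !sumr_const card_ord.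
  rewrite -[2 *+ p]mulr_natr -[(_ / 2) *+ p]mulr_natr.
  ring.
have h1 : M * S <= M * c0 ^+ 2 by rewrite ler_pM2l.
have h2 : p%:R * `|ln C| <= C * M * `|ln C| by apply: ler_wpM2r.
have h3 : alpha * \sum_(k < p) Num.sqrt (M / (k.+1)%:R) <= alpha * (2 * Num.sqrt C * M).
  by apply: ler_wpM2l => //; exact: ltW.
rewrite /c; lra.
Qed.
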